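(* Let $\mathcal S$ be a productive higher-order recursion scheme and $\mathcal A$ a restriction such that for every symbol $a^r$ appearing in any tree generated by $\mathcal S$ there is a transition of $\mathcal A$ having $a^r$ on its left side. Then one can build a higher-order recursion scheme $\mathcal S'$ whose language is the image of $L(\mathcal S)$ under $T(\mathcal A)$.
   Context: A higher-order recursion scheme (HORS) $\mathcal S=(A_{init},\mathcal R)$ has an initial nonterminal $A_{init}$ of sort $o$ and a finite set of (possibly several per nonterminal) rules $A\,x_1\dots x_k\to K$, $K$ a simply-typed applicative term of sort $o$ built from symbols $a^r$ (sort $o^r\to o$), nonterminals and the variables $x_i$; reduction rewrites $A\,M_1\dots M_k$ into $K[M_1/x_1,\dots,M_k/x_k]$ (also inside arguments of symbols), and $L(\mathcal S)$ is the set of finite trees (closed sort-$o$ terms without nonterminals) reachable from $A_{init}$. $\mathcal S$ is productive if every term reachable from $A_{init}$ can be reduced to some finite tree. A bottom-up finite tree transducer $\mathcal A$ defines a relation $T(\mathcal A)$ on trees in the standard way; a restriction is such a transducer with a single (final) state $q$ all of whose transitions have the form $a^r\,(q,x_1)\dots(q,x_r)\to q,\,b^n\,x_{i_1}\dots x_{i_n}$ with $1\le i_1<\dots<i_n\le r$ (relabel a node and discard some of its subtrees). *)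

(* Defs.v *)
From Stdlib Require Import List Arith Relations Sorted.
Import ListNotations.

Inductive sort : Type :=
| O : sort
| Arr : sort -> sort -> sort.

Fixpoint sym_sort (r : nat) : sort :=
  match r with 0 => O | S r' => Arr O (sym_sort r') end.

Definition arrows (ss : list sort) : sort := fold_right Arr O ss.

(** Finite ranked trees: a node labelled [a] with [r] children is the
    symbol a^r applied to its r subtrees. *)
Inductive tree : Type :=
| Node : nat -> list tree -> tree.

(** Applicative terms: symbols a^r (label a, rank r), nonterminals,
    variables x_1..x_k (encoded as Var 0 .. Var (k-1)), application. *)
Inductive term : Type :=
| Sym : nat -> nat -> term
| NT : nat -> term
| Var : nat -> term
| App : term -> term -> term.

Definition apps (h : term) (l : list term) : term := fold_left App l h.

Record rule : Type := mkRule {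
  r_lhs : nat;
  r_params : list sort;
  r_body : term
}.

Record hors : Type := mkHORS {
  h_ntsort : nat -> sort;
  h_init : nat;
  h_rules : list rule
}.

Inductive has_sort (N : nat -> sort) (G : list sort) : term -> sort -> Prop :=
| ty_sym a r : has_sort N G (Sym a r) (sym_sort r)
| ty_nt A : has_sort N G (NT A) (N A)
| ty_var i s : nth_error G i = Some s -> has_sort N G (Var i) s
| ty_app t u s1 s2 :
    has_sort N G t (Arr s1 s2) -> has_sort N G u s1 -> has_sort N G (App t u) s2.

Definition wf_rule (N : nat -> sort) (R : rule) : Prop :=
  N (r_lhs R) = arrows (r_params R) /\ has_sort N (r_params R) (r_body R) O.

Definition wf_hors (S : hors) : Prop :=
  h_ntsort S (h_init S) = O /\ forall R, In R (h_rules S) -> wf_rule (h_ntsort S) R.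

Fixpoint subst (Ms : list term) (t : term) : term :=
  match t with
  | Var i => nth i Ms (Var i)
  | App t u => App (subst Ms t) (subst Ms u)
  | _ => t
  end.

Inductive step (S : hors) : term -> term -> Prop :=
| step_rule R Ms :
    In R (h_rules S) -> length Ms = length (r_params R) ->
    step S (apps (NT (r_lhs R)) Ms) (subst Ms (r_body R))
| step_sym a r Ns1 N N' Ns2 :
    step S N N' ->
    step S (apps (Sym a r) (Ns1 ++ N :: Ns2)) (apps (Sym a r) (Ns1 ++ N' :: Ns2)).

Definition reduces (S : hors) : term -> term -> Prop := clos_refl_trans term (step S).

Definition reachable (S : hors) (t : term) : Prop := reduces S (NT (h_init S)) t.

Inductive is_tree : term -> tree -> Prop :=
| is_tree_node a Ns Ts :
    Forall2 is_tree Ns Ts ->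
    is_tree (apps (Sym a (length Ns)) Ns) (Node a Ts).

Definition in_lang (S : hors) (T : tree) : Prop :=
  exists t, reachable S t /\ is_tree t T.

Definition productive (S : hors) : Prop :=
  forall t, reachable S t -> exists t' T, reduces S t t' /\ is_tree t' T.

Inductive appears (a r : nat) : tree -> Prop :=
| appears_here Ts : length Ts = r -> appears a r (Node a Ts)
| appears_below b Ts T : In T Ts -> appears a r T -> appears a r (Node b Ts).

(** Transition of a restriction:
      a^r (q,x_1) .. (q,x_r) -> q, b^n x_{i_1} .. x_{i_n}
    with i_1 < .. < i_n; indices are stored 0-based in [t_kept]
    (so 0 <= i_1 < .. < i_n < r), and n = length t_kept. *)
Record transition : Type := mkTr {
  t_src : nat;
  t_rank : nat;
  t_tgt : nat;
  t_kept : list nat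
}.

Definition wf_transition (tr : transition) : Prop :=
  Sorted lt (t_kept tr) /\ Forall (fun i => i < t_rank tr) (t_kept tr).

(** A restriction: single (final) state q, finite set of transitions. *)
Definition restriction : Type := list transition.

Definition wf_restriction (A : restriction) : Prop :=
  forall tr, In tr A -> wf_transition tr.

Inductive transduce (A : restriction) : tree -> tree -> Prop :=
| transduce_node a Ts Us b kept :
    In (mkTr a (length Ts) b kept) A ->
    Forall2 (transduce A) Ts Us ->
    transduce A (Node a Ts) (Node b (map (fun i => nth i Us (Node 0 [])) kept)).

(* Main.v *)
From Stdlib Require Import List Arith Lia Relations Sorted Wf_nat Cantor.
Require Import Defs.
Import ListNotations.

Definition notApp (t : term) : Prop := match t with App _ _ => False | _ => True end.

Fixpoint spine (t : term) : term * list term :=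
  match t with
  | App t u => (fst (spine t), snd (spine t) ++ [u])
  | _ => (t, [])
  end.

Lemma spine_apps : forall l t, spine (apps t l) = (fst (spine t), snd (spine t) ++ l).
Proof.
  induction l as [|x l IH]; intros t; simpl.
  - rewrite app_nil_r. destruct (spine t); reflexivity.
  - unfold apps in *. simpl. rewrite IH. simpl. rewrite <- app_assoc. reflexivity.
Qed.

Lemma apps_inj : forall h h' l l', notApp h -> notApp h' -> apps h l = apps h' l' -> h = h' /\ l = l'.
Proof.
  intros h h' l l' H1 H2 E. apply (f_equal spine) in E. rewrite !spine_apps in E.
  destruct h; try contradiction; destruct h'; try contradiction; simpl in E;
  inversion E; auto.
Qed.

Lemma spine_spec : forall t, notApp (fst (spine t)) /\ t = apps (fst (spine t)) (snd (spine t)).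
Proof.
  induction t; simpl; auto.
  destruct IHt1 as [H1 E1]. split; auto.
  unfold apps. rewrite fold_left_app. simpl. fold (apps (fst (spine t1)) (snd (spine t1))).
  rewrite <- E1. reflexivity.
Qed.

Lemma apps_cons : forall h x l, apps h (x :: l) = apps (App h x) l.
Proof. reflexivity. Qed.

Section Gen.
Variable X : hors.

Inductive bsn : nat -> term -> tree -> Prop :=
| bsn_rule n R Ms T : In R (h_rules X) -> length Ms = length (r_params R) ->
    bsn n (subst Ms (r_body R)) T -> bsn (S n) (apps (NT (r_lhs R)) Ms) T
| bsn_sym n a Ns Ts : Forall2 (bsn n) Ns Ts -> bsn (S n) (apps (Sym a (length Ns)) Ns) (Node a Ts).

Definition ev (t : term) (T : tree) : Prop := exists t', reduces X t t' /\ is_tree t' T.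

Lemma bsn_mono : forall n t T, bsn n t T -> bsn (S n) t T.
Proof.
  induction n; intros t T H; inversion H; subst.
  - eapply bsn_rule; eauto.
  - apply bsn_sym. eapply Forall2_impl; [|eassumption]. auto.
Qed.

Lemma bsn_mono_le : forall n m t T, n <= m -> bsn n t T -> bsn m t T.
Proof.
  intros n m t T Hle. induction Hle; auto. intros; apply bsn_mono; auto.
Qed.

Lemma inv_sym : forall n a r L T, bsn n (apps (Sym a r) L) T ->
  exists k Ts, n = S k /\ T = Node a Ts /\ r = length L /\ Forall2 (bsn k) L Ts.
Proof.
  intros n a r L T H. inversion H; subst.
  - apply apps_inj in H0; simpl; auto. destruct H0 as [E _]; discriminate.
  - apply apps_inj in H0; simpl; auto. destruct H0 as [E1 E2]. inversion E1; subst.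
    eauto 10.
Qed.

Lemma inv_nt : forall n k L T, bsn n (apps (NT k) L) T ->
  exists m R, n = S m /\ In R (h_rules X) /\ r_lhs R = k /\ length L = length (r_params R) /\
    bsn m (subst L (r_body R)) T.
Proof.
  intros n k L T H. inversion H; subst.
  - apply apps_inj in H0; simpl; auto. destruct H0 as [E1 E2]. inversion E1; subst. eauto 10.
  - apply apps_inj in H0; simpl; auto. destruct H0 as [E _]; discriminate.
Qed.

Lemma red_sym1 : forall a r Ns1 N N' Ns2, reduces X N N' ->
  reduces X (apps (Sym a r) (Ns1 ++ N :: Ns2)) (apps (Sym a r) (Ns1 ++ N' :: Ns2)).
Proof.
  intros a r Ns1 N N' Ns2 H. induction H.
  - apply rt_step. apply step_sym. auto.
  - apply rt_refl.
  - eapply rt_trans; eauto.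
Qed.

Lemma red_symF : forall a r Ns Ns', Forall2 (reduces X) Ns Ns' -> forall pre,
  reduces X (apps (Sym a r) (pre ++ Ns)) (apps (Sym a r) (pre ++ Ns')).
Proof.
  intros a r Ns Ns' H. induction H; intros pre.
  - apply rt_refl.
  - eapply rt_trans. apply red_sym1. eassumption.
    specialize (IHForall2 (pre ++ [y])). rewrite <- !app_assoc in IHForall2. exact IHForall2.
Qed.

Lemma ev_sym : forall a Ns Ts, Forall2 ev Ns Ts -> ev (apps (Sym a (length Ns)) Ns) (Node a Ts).
Proof.
  intros a Ns Ts H.
  assert (exists Ns', Forall2 (reduces X) Ns Ns' /\ Forall2 is_tree Ns' Ts) as [Ns' [H1 H2]].
  { induction H as [|x y l l' [x' [Hr Ht]] _ [Ns' [H1 H2]]].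
    - exists []; split; constructor.
    - exists (x' :: Ns'); split; constructor; auto. }
  exists (apps (Sym a (length Ns)) Ns'). split.
  - apply (red_symF _ _ _ _ H1 []).
  - rewrite (Forall2_length H1). constructor. auto.
Qed.

Lemma bsn_ev : forall n t T, bsn n t T -> ev t T.
Proof.
  induction n; intros t T H; inversion H; subst.
  - destruct (IHn _ _ H3) as [t' [Hr Ht]]. exists t'. split; auto.
    eapply rt_trans; [apply rt_step; apply step_rule; eauto | exact Hr].
  - apply ev_sym. eapply Forall2_impl; [|eassumption]. auto.
Qed.

Lemma step_bsn : forall t t1, step X t t1 -> forall n T, bsn n t1 T -> bsn (S n) t T.
Proof.
  intros t t1 H. induction H; intros n T Hb.
  - eapply bsn_rule; eauto.
  - apply inv_sym in Hb. destruct Hb as [k [Ts [-> [-> [Er HF]]]]].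
    rewrite !length_app in Er. simpl in Er.
    apply Forall2_app_inv_l in HF. destruct HF as [T1 [T2 [HF1 [HF2 ->]]]].
    inversion HF2; subst.
    match goal with |- bsn _ (apps (Sym _ ?r) _) _ => assert (r = length (Ns1 ++ N :: Ns2)) as -> by (rewrite length_app; simpl; lia) end.
    apply bsn_sym. apply Forall2_app.
    + eapply Forall2_impl; [|eassumption]. apply bsn_mono.
    + constructor; auto. eapply Forall2_impl; [|eassumption]. apply bsn_mono.
Qed.

Fixpoint tree_ind' (P : tree -> Prop) (f : forall a Ts, Forall P Ts -> P (Node a Ts)) (t : tree) : P t :=
  match t with
  | Node a Ts => f a Ts ((fix go (l : list tree) : Forall P l :=
      match l with [] => Forall_nil _ | x :: l' => Forall_cons _ (tree_ind' P f x) (go l') end) Ts)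
  end.

Lemma bound_F2 : forall Ns Ts, Forall2 (fun N T => exists n, bsn n N T) Ns Ts ->
  exists n, Forall2 (bsn n) Ns Ts.
Proof.
  intros Ns Ts H. induction H as [|x y l l' [n Hn] _ [m Hm]].
  - exists 0; constructor.
  - exists (max n m). constructor.
    + eapply bsn_mono_le; [|eauto]; lia.
    + eapply Forall2_impl; [|eassumption]. intros; eapply bsn_mono_le; [|eauto]; lia.
Qed.

Lemma tree_bsn : forall T t, is_tree t T -> exists n, bsn n t T.
Proof.
  apply (tree_ind' (fun T => forall t, is_tree t T -> exists n, bsn n t T)).
  intros a Ts IH t H. inversion H as [a0 Ns Ts0 H1]; subst.
  assert (exists n, Forall2 (bsn n) Ns Ts) as [n Hn].
  { apply bound_F2. clear H. induction H1; constructor; inversion IH; subst; auto. }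
  exists (S n). constructor; auto.
Qed.

Lemma ev_bsn : forall t T, ev t T -> exists n, bsn n t T.
Proof.
  intros t T [t' [Hr Ht]]. apply clos_rt_rt1n in Hr. induction Hr.
  - eapply tree_bsn; eauto.
  - destruct (IHHr Ht) as [n Hn]. exists (S n). eapply step_bsn; eauto.
Qed.

End Gen.

Definition code (a r : nat) : nat := S (2 * to_nat (a, r)).

Fixpoint phi (t : term) : term :=
  match t with
  | Sym a r => NT (code a r)
  | NT k => NT (2 * k)
  | Var i => Var i
  | App t u => App (phi t) (phi u)
  end.

Definition ntsort' (N : nat -> sort) (m : nat) : sort :=
  if Nat.even m then N (Nat.div2 m) else sym_sort (snd (of_nat (Nat.div2 m))).

Definition lift (R : rule) : rule := mkRule (2 * r_lhs R) (r_params R) (phi (r_body R)).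
Definition trrule (tr : transition) : rule :=
  mkRule (code (t_src tr) (t_rank tr)) (repeat O (t_rank tr))
    (apps (Sym (t_tgt tr) (length (t_kept tr))) (map Var (t_kept tr))).
Definition build (X : hors) (A : restriction) : hors :=
  mkHORS (ntsort' (h_ntsort X)) (2 * h_init X) (map lift (h_rules X) ++ map trrule A).

Lemma parity : forall k, Nat.even (2*k) = true /\ Nat.even (S (2*k)) = false /\
  Nat.div2 (2*k) = k /\ Nat.div2 (S (2*k)) = k.
Proof.
  intros k. rewrite Nat.even_succ, Nat.even_mul, Nat.odd_mul, Nat.div2_double, Nat.div2_succ_double.
  auto.
Qed.

Lemma ntsort_even : forall N k, ntsort' N (2 * k) = N k.
Proof. intros. unfold ntsort'. destruct (parity k) as [-> [_ [-> _]]]. auto. Qed.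

Lemma ntsort_code : forall N a r, ntsort' N (code a r) = sym_sort r.
Proof. intros. unfold ntsort', code. destruct (parity (to_nat (a, r))) as [_ [-> [_ ->]]].
  rewrite cancel_of_to. auto. Qed.

Lemma code_inj : forall a r a' r', code a r = code a' r' -> a = a' /\ r = r'.
Proof.
  unfold code. intros. assert (to_nat (a, r) = to_nat (a', r')) by lia.
  apply (f_equal of_nat) in H0. rewrite !cancel_of_to in H0. inversion H0. auto.
Qed.

Lemma phi_apps : forall l h, phi (apps h l) = apps (phi h) (map phi l).
Proof. induction l; intros h; [reflexivity|]. rewrite !apps_cons, IHl. reflexivity. Qed.

Lemma subst_apps : forall Ms l h, subst Ms (apps h l) = apps (subst Ms h) (map (subst Ms) l).
Proof. induction l; intros h; [reflexivity|]. rewrite !apps_cons, IHl. reflexivity. Qed.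

Lemma phi_subst : forall Ms t, phi (subst Ms t) = subst (map phi Ms) (phi t).
Proof.
  induction t; simpl; auto.
  - change (Var n) with (phi (Var n)) at 2. rewrite map_nth. auto.
  - rewrite IHt1, IHt2; auto.
Qed.

Lemma phi_sort : forall N G t s, has_sort N G t s -> has_sort (ntsort' N) G (phi t) s.
Proof.
  induction 1; simpl.
  - rewrite <- (ntsort_code N a r). constructor.
  - rewrite <- (ntsort_even N A). constructor.
  - constructor; auto.
  - econstructor; eauto.
Qed.

Lemma sym_sort_arrows : forall r, sym_sort r = arrows (repeat O r).
Proof. induction r; simpl; auto. rewrite IHr. auto. Qed.

Lemma sort_vars : forall N G r ks h, Forall (fun i => i < r) ks -> G = repeat O r ->
  has_sort N G h (fold_right Arr O (map (fun _ => O) ks)) ->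
  has_sort N G (apps h (map Var ks)) O.
Proof.
  intros N G r ks. induction ks; intros h HF HG Hh; [exact Hh|].
  inversion HF; subst. simpl map. rewrite apps_cons. apply IHks; auto.
  apply ty_app with O; [exact Hh|]. constructor. apply nth_error_repeat. auto.
Qed.

Lemma sym_sort_map : forall (ks : list nat), sym_sort (length ks) = fold_right Arr O (map (fun _ => O) ks).
Proof. induction ks; simpl; auto. rewrite IHks; auto. Qed.

Lemma build_wf : forall X A, wf_hors X -> wf_restriction A -> wf_hors (build X A).
Proof.
  intros X A [Hi HR] HA. split.
  - exact (eq_trans (ntsort_even _ _) Hi).
  - cbn [build h_rules]. intros R HIn. apply in_app_or in HIn. destruct HIn as [HIn|HIn];
    apply in_map_iff in HIn; destruct HIn as [x [<- Hx]].
    + destruct (HR x Hx) as [H1 H2]. split; cbn [build h_ntsort lift r_lhs r_params r_body].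
      * rewrite ntsort_even. auto.
      * apply phi_sort. auto.
    + destruct (HA x Hx) as [_ Hk]. split; cbn [build h_ntsort trrule r_lhs r_params r_body].
      *  rewrite ntsort_code. apply sym_sort_arrows.
      * eapply sort_vars; eauto. rewrite <- sym_sort_map. constructor.
Qed.

Lemma F2_nth : forall {X Y} (R : X -> Y -> Prop) xs ys, Forall2 R xs ys ->
  forall i dx dy, i < length xs -> R (nth i xs dx) (nth i ys dy).
Proof.
  induction 1; intros i dx dy Hi; simpl in *; [lia|].
  destruct i; auto. apply IHForall2. lia.
Qed.

Lemma F2_nth_error : forall {X Y} (R : X -> Y -> Prop) xs ys, Forall2 R xs ys ->
  forall i x y, nth_error xs i = Some x -> nth_error ys i = Some y -> R x y.
Proof.
  induction 1; intros i x' y' E1 E2; destruct i; simpl in *; try discriminate.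
  - inversion E1; inversion E2; subst; auto.
  - eauto.
Qed.

Lemma nth_F2 : forall {X Y} (R : X -> Y -> Prop) xs ys dx dy, length xs = length ys ->
  (forall i, i < length xs -> R (nth i xs dx) (nth i ys dy)) -> Forall2 R xs ys.
Proof.
  induction xs; intros ys dx dy Hl H; destruct ys; simpl in *; try discriminate; constructor.
  - apply (H 0). lia.
  - apply (IHxs ys dx dy); [lia|]. intros i Hi. apply (H (S i)). lia.
Qed.

Lemma F2_map : forall {X Y} (R : X -> Y -> Prop) (f : nat -> X) (g : nat -> Y) len ks,
  Forall (fun i => i < len) ks -> (forall i, i < len -> R (f i) (g i)) ->
  Forall2 R (map f ks) (map g ks).
Proof. induction ks; intros HF H; simpl; constructor; inversion HF; subst; auto. Qed.

Lemma choice_list : forall {B} (d : B) (Q : nat -> B -> Prop) r,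
  (forall i, i < r -> exists x, Q i x) -> exists xs, length xs = r /\ forall i, i < r -> Q i (nth i xs d).
Proof.
  induction r; intros H.
  - exists []. split; auto. intros; lia.
  - assert (H' : forall i, i < r -> exists x, Q i x) by (intros; apply H; lia).
    destruct (IHr H') as [xs [Hl Hq]].
    destruct (H r) as [x Hx]; [lia|].
    exists (xs ++ [x]). split. { rewrite length_app; simpl; lia. }
    intros i Hi. destruct (Nat.eq_dec i r).
    + subst i. rewrite app_nth2; [|lia]. rewrite Hl, Nat.sub_diag. auto.
    + rewrite app_nth1; [|lia]. apply Hq; lia.
Qed.

Lemma sorted_nodup : forall l, Sorted lt l -> NoDup l.
Proof.
  intros l H. apply Sorted_StronglySorted in H; [|intros x y z; lia].
  induction H; constructor; auto.
  intros HIn. rewrite Forall_forall in H0. specialize (H0 a HIn). lia.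
Qed.

Lemma ev_step : forall X t t1 T, step X t t1 -> ev X t1 T -> ev X t T.
Proof.
  intros X t t1 T Hs [t' [Hr Ht]]. exists t'. split; auto. eapply rt_trans; [apply rt_step|]; eauto.
Qed.

Definition nodes_ok (A : restriction) (T : tree) : Prop :=
  forall a r, appears a r T -> exists tr, In tr A /\ t_src tr = a /\ t_rank tr = r.

Lemma run_exists : forall A T, nodes_ok A T -> exists U, transduce A T U.
Proof.
  intros A. apply (tree_ind' (fun T => nodes_ok A T -> exists U, transduce A T U)).
  intros a Ts IH Hok.
  assert (exists Us, Forall2 (transduce A) Ts Us) as [Us HUs].
  { assert (forall T, In T Ts -> nodes_ok A T) as Hc.
    { intros T HT a' r' Ha. apply Hok. eapply appears_below; eauto. }
    clear Hok. induction IH.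
    - exists []; constructor.
    - destruct (H (Hc x (or_introl eq_refl))) as [u Hu].
      destruct IHIH as [Us HUs]; [intros; apply Hc; right; auto|].
      exists (u :: Us); constructor; auto. }
  destruct (Hok a (length Ts) (appears_here _ _ _ eq_refl)) as [[src rank tgt kept] [HIn [Hs Hr]]].
  simpl in *; subst. eexists. econstructor; eauto.
Qed.

Section Main.
Variable X : hors.
Variable A : restriction.
Let Y := build X A.

Hypothesis HA : wf_restriction A.

Lemma sup : forall n t T, bsn X n t T -> forall U, transduce A T U -> ev Y (phi t) U.
Proof.
  induction n; intros t T H U HU; inversion H; subst.
  - rewrite phi_apps. eapply ev_step.
    + apply (step_rule Y (lift R)).
      * cbn [Y build h_rules]. apply in_or_app. left. apply in_map. auto.
      * rewrite length_map. auto.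
    + cbn [lift r_body]. rewrite <- phi_subst. eauto.
  - inversion HU; subst. assert (E : length Ns = length Ts) by (eapply Forall2_length; eauto).
    rewrite phi_apps. cbn [phi]. rewrite E. eapply ev_step.
    + apply (step_rule Y (trrule (mkTr a (length Ts) b kept))).
      * cbn [Y build h_rules]. apply in_or_app. right. apply in_map. auto.
      * cbn [trrule r_params t_rank]. rewrite length_map, repeat_length.
        auto.
    + cbn [trrule r_body t_kept t_tgt]. rewrite subst_apps. cbn [subst]. rewrite map_map.
      cbn [subst].
      replace (length kept) with (length (map (fun x => nth x (map phi Ns) (Var x)) kept))
        by apply length_map.
      apply ev_sym. destruct (HA _ H3) as [_ Hk]. cbn [t_kept t_rank] in Hk.
      apply (F2_map _ _ _ (length Ts)); auto.
      intros i Hi. rewrite <- E in Hi.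
      change (Var i) with (phi (Var i)). rewrite map_nth.
      apply (IHn _ (nth i Ts (Node 0 []))).
      * apply F2_nth; auto.
      * apply F2_nth; auto; lia.
Qed.

Definition P (t : term) : Prop := forall t', reduces X t t' -> exists T, ev X t' T.

Lemma P_rule : forall R l, In R (h_rules X) -> length l = length (r_params R) ->
  P (apps (NT (r_lhs R)) l) -> P (subst l (r_body R)).
Proof.
  intros R l HR Hl HP t' Hr. apply HP. eapply rt_trans; [apply rt_step; apply step_rule|]; eauto.
Qed.

Lemma P_child : forall a r l i, i < length l -> P (apps (Sym a r) l) -> P (nth i l (Var 0)).
Proof.
  intros a r l i Hi HP t' Hr.
  destruct (nth_split l (Var 0) Hi) as [l1 [l2 [El _]]].
  rewrite El in HP.
  destruct (HP _ (red_sym1 X a r l1 _ _ l2 Hr)) as [T HT].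
  apply ev_bsn in HT. destruct HT as [n Hn]. apply inv_sym in Hn.
  destruct Hn as [k [Ts [_ [_ [_ HF]]]]].
  apply Forall2_app_inv_l in HF. destruct HF as [T1 [T2 [_ [HF2 _]]]].
  inversion HF2; subst. eexists. eapply bsn_ev; eauto.
Qed.

Lemma inv_var : forall n i L U, bsn Y n (apps (Var i) L) U -> False.
Proof.
  intros n i L U H. inversion H; subst.
  - apply apps_inj in H0; simpl; auto. destruct H0 as [E _]; discriminate.
  - apply apps_inj in H0; simpl; auto. destruct H0 as [E _]; discriminate.
Qed.

Lemma sub : forall n s U, bsn Y n s U -> forall t, s = phi t -> P t ->
  exists T, ev X t T /\ (nodes_ok A T -> transduce A T U).
Proof.
  intros n. induction n as [n IH] using lt_wf_ind.
  intros s U Hb t Es HP.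
  destruct (spine_spec t) as [Hh Et].
  remember (fst (spine t)) as h. remember (snd (spine t)) as l. clear Heqh Heql. subst t.
  rewrite phi_apps in Es. subst s.
  destruct h as [a r | k | i | ? ?]; cbn [phi] in Hb; try contradiction.
  - apply inv_nt in Hb. destruct Hb as [m [R' [-> [HR' [Hlhs [Hlen Hb]]]]]].
    cbn [Y build h_rules] in HR'. apply in_app_or in HR'.
    destruct HR' as [HR'|HR']; apply in_map_iff in HR'; destruct HR' as [x [<- Hx]].
    + cbn [lift r_lhs] in Hlhs. unfold code in Hlhs. lia.
    + destruct x as [src rank tgt kept].
      cbn [trrule r_lhs r_params r_body t_src t_rank t_tgt t_kept] in *.
      apply code_inj in Hlhs. destruct Hlhs as [-> ->].
      rewrite length_map, repeat_length in Hlen.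
      rewrite subst_apps, map_map in Hb. cbn [subst] in Hb.
      apply inv_sym in Hb. destruct Hb as [j [Us [-> [-> [Hlk HF]]]]].
      destruct (HA _ Hx) as [Hsort Hk]. cbn [t_kept t_rank] in Hsort, Hk.
      pose proof (proj1 (NoDup_nth_error _) (sorted_nodup _ Hsort)) as Hnd.
      destruct (HP _ (rt_refl _ _ _)) as [T0 H0]. apply ev_bsn in H0.
      destruct H0 as [k0 H0]. apply inv_sym in H0.
      destruct H0 as [k1 [T0s [_ [_ [_ HF0]]]]].
      pose proof (Forall2_length HF) as Hlenk. rewrite length_map in Hlenk.
      assert (Hch: forall i, i < r -> exists Ti, ev X (nth i l (Var 0)) Ti /\
        (forall p u, nth_error kept p = Some i -> nth_error Us p = Some u ->
           nodes_ok A Ti -> transduce A Ti u)).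
      { intros i Hi. destruct (in_dec Nat.eq_dec i kept) as [Hin|Hnin].
        - destruct (In_nth_error _ _ Hin) as [p Hp].
          assert (Hpl : p < length kept) by (apply nth_error_Some; congruence).
          destruct (nth_error Us p) as [u|] eqn:Hu.
          2: { exfalso. apply nth_error_None in Hu. lia. }
          pose proof (F2_nth_error _ _ _ HF p _ u (map_nth_error _ _ _ Hp) Hu) as Hbu.
          cbn beta in Hbu.
          change (Var i) with (phi (Var i)) in Hbu. rewrite map_nth in Hbu.
          rewrite (nth_indep l (Var i) (Var 0)) in Hbu by lia.
          destruct (IH j ltac:(lia) _ _ Hbu (nth i l (Var 0)) eq_refl
                      (P_child a r l i ltac:(lia) HP)) as [Ti [HTi HTu]].
          exists Ti. split; auto. intros p' u' Hp' Hu' Hok.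
          assert (p' = p) by (apply Hnd; [apply nth_error_Some; congruence | congruence]).
          subst p'. rewrite Hu in Hu'. inversion Hu'; subst. auto.
        - exists (nth i T0s (Node 0 [])). split.
          + apply (bsn_ev X k1). apply F2_nth; [exact HF0|lia].
          + intros p u Hp. exfalso. apply Hnin. eapply nth_error_In; eauto. }
      apply (choice_list (Node 0 [])) in Hch. destruct Hch as [Ts [HlTs HTs]].
      exists (Node a Ts). split.
      * rewrite <- Hlen. apply ev_sym.
        apply (nth_F2 _ _ _ (Var 0) (Node 0 [])); [lia|]. intros i Hi. apply HTs; lia.
      * intros Hok.
        assert (Hus: forall i, i < r -> exists u, transduce A (nth i Ts (Node 0 [])) u /\
                 (forall p, nth_error kept p = Some i -> nth_error Us p = Some u)).
        { intros i Hi.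
          assert (Hoki : nodes_ok A (nth i Ts (Node 0 []))).
          { intros a' r' Ha'. apply Hok. apply (appears_below _ _ a Ts (nth i Ts (Node 0 []))); [apply nth_In; lia | exact Ha']. }
          destruct (in_dec Nat.eq_dec i kept) as [Hin|Hnin].
          - destruct (In_nth_error _ _ Hin) as [p Hp].
            assert (Hpl : p < length kept) by (apply nth_error_Some; congruence).
            destruct (nth_error Us p) as [u|] eqn:Hu.
            2: { exfalso. apply nth_error_None in Hu. lia. }
            exists u. split. { eapply (proj2 (HTs i Hi)); eauto. }
            intros p' Hp'.
            assert (p' = p) by (apply Hnd; [apply nth_error_Some; congruence | congruence]).
            subst; auto.
          - destruct (run_exists _ _ Hoki) as [u Hu]. exists u. split; auto.
            intros p Hp; exfalso; apply Hnin; eapply nth_error_In; eauto. }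
        apply (choice_list (Node 0 [])) in Hus. destruct Hus as [Us0 [HlU HU0]].
        assert (EU : Us = map (fun i => nth i Us0 (Node 0 [])) kept).
        { apply nth_error_ext. intros p. rewrite nth_error_map.
          destruct (nth_error kept p) as [i|] eqn:Hp; simpl.
          - assert (Hir : i < r).
            { rewrite Forall_forall in Hk. apply Hk. eapply nth_error_In; eauto. }
            apply (proj2 (HU0 i Hir)); auto.
          - apply nth_error_None. apply nth_error_None in Hp. lia. }
        rewrite EU. replace r with (length Ts) in Hx by lia. apply transduce_node; auto.
        apply (nth_F2 _ _ _ (Node 0 []) (Node 0 [])); [lia|]. intros i Hi. apply HU0; lia.
  - apply inv_nt in Hb. destruct Hb as [m [R' [-> [HR' [Hlhs [Hlen Hb]]]]]].
    cbn [Y build h_rules] in HR'. apply in_app_or in HR'.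
    destruct HR' as [HR'|HR']; apply in_map_iff in HR'; destruct HR' as [x [<- Hx]].
    + cbn [lift r_lhs r_params r_body] in Hlhs, Hlen, Hb.
      assert (Ek : r_lhs x = k) by lia. subst k.
      rewrite length_map in Hlen. rewrite <- phi_subst in Hb.
      destruct (IH m ltac:(lia) _ _ Hb _ eq_refl (P_rule x l Hx Hlen HP)) as [T [HT HTU]].
      exists T; split; auto. eapply ev_step; [apply step_rule; eauto | auto].
    + cbn [trrule r_lhs] in Hlhs. unfold code in Hlhs. lia.
  - exfalso. eapply inv_var; eauto.
Qed.
End Main.

Theorem lemma17 (S : hors) (A : restriction) :
  wf_hors S -> productive S -> wf_restriction A ->
  (forall T a r, in_lang S T -> appears a r T ->
     exists tr, In tr A /\ t_src tr = a /\ t_rank tr = r) ->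
  { S' : hors | wf_hors S' /\
      forall U, in_lang S' U <-> exists T, in_lang S T /\ transduce A T U }.
Proof.
  intros Hwf Hprod HA Happ. exists (build S A). split; [apply build_wf; auto|].
  intros U; split.
  - intros HU. destruct (ev_bsn _ _ _ HU) as [n Hn].
    assert (HP : P S (NT (h_init S))).
    { intros t' Hr. destruct (Hprod t' Hr) as [t'' [T [H1 H2]]]. exists T, t''. auto. }
    destruct (sub S A HA n _ U Hn (NT (h_init S)) eq_refl HP) as [T [HT HTU]].
    exists T. split; auto. apply HTU. intros a r Ha. eapply Happ; eauto.
  - intros [T [HT HTU]]. destruct (ev_bsn _ _ _ HT) as [n Hn].
    exact (sup S A HA n _ _ Hn U HTU).
Qed.
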